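(* Let $\beta>0$, $K\ge1$, users $\mathcal X=\{x_1,\dots,x_m\}\subset\mathbb R^d$ and $\sigma:\mathbb R^d\times\mathbb R^d\to[0,1]$ be fixed. Then the welfare $W$, viewed as a function of a finite multiset of strategies, is submodular: for every finite multiset $S$ of strategies with $|S|\ge K-1$ and any strategies $s_x,s_y\in\mathbb R^d$, $$W(S\cup\{s_x\})-W(S)\ge W(S\cup\{s_x,s_y\})-W(S\cup\{s_y\}).$$
   Context: For a finite multiset $S$ of strategies (points of $\mathbb R^d$) with $|S|\ge K$ and a user $x_j$, $\mathcal T_j(S;K)$ is a sub-multiset of $K$ elements of $S$ with the largest values of $\sigma(\cdot,x_j)$; if $|S|=K-1$, $\mathcal T_j(S;K)=S\cup\{\bar s\}$ where $\bar s$ is a default item with $\sigma(\bar s,x)=0$ for all $x$. With $\varepsilon_s$ ($s\in\mathcal T_j(S;K)$) i.i.d. Gumbel of location $-\beta\gamma$ and scale $\beta$ (CDF $t\mapsto\exp(-e^{-(t+\beta\gamma)/\beta})$, $\gamma$ the Euler–Mascheroni constant), the welfare is $W(S)=\sum_{j=1}^m\mathbb E\big[\max_{s\in\mathcal T_j(S;K)}\{\sigma(s,x_j)+\varepsilon_s\}\big]$, which equals $\beta\sum_{j=1}^m\log\sum_{s\in\mathcal T_j(S;K)}\exp(\sigma(s,x_j)/\beta)$. When $S=\{s_1,\dots,s_n\}$ comes from a joint strategy of a competing content creation game, this is the social welfare of that game under top-$K$ recommendation and the Gumbel random-utility choice model. *)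

(* Defs.v *)
From HB Require Import structures.
From mathcomp Require Import all_boot all_order all_algebra.
From mathcomp Require Import all_classical all_reals all_analysis.
Set Implicit Arguments. Unset Strict Implicit. Unset Printing Implicit Defensive.
Import Order.TTheory GRing.Theory Num.Theory.
Local Open Scope ring_scope.

Section Welfare.
Variables (R : realType) (d : nat).
Notation strat := 'rV[R]_d.

(* A finite multiset of strategies is a list (order irrelevant). *)

(* Scores sigma(s, x) of the items of T_x(S;K): the K items of S with the
   largest scores (obtained by sorting S in decreasing score order and
   taking the first K), padded with default items of score 0 when
   |S| < K (the paper only uses the case |S| = K-1, i.e. one default). *)
Definition topK_scores (sigma : strat -> strat -> R) (K : nat)
    (S : seq strat) (x : strat) : seq R :=
  [seq sigma s x | s <- take K (sort (fun a b => sigma b x <= sigma a x) S)]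
  ++ nseq (K - size S) 0.

Definition welfare (sigma : strat -> strat -> R) (beta : R) (K m : nat)
    (X : 'I_m -> strat) (S : seq strat) : R :=
  beta * \sum_(j < m) ln (\sum_(v <- topK_scores sigma K S (X j)) expR (v / beta)).

End Welfare.

(* Main.v *)
Require Import Defs.
From HB Require Import structures.
From mathcomp Require Import all_boot all_order all_algebra.
From mathcomp Require Import all_classical all_reals all_analysis.
From mathcomp Require Import lra.
Import Order.TTheory GRing.Theory Num.Theory.
Local Open Scope ring_scope.

Section Core.
Variable R : realType.
Definition ger : rel R := fun a b => b <= a.

Fixpoint ins (a : R) (s : seq R) : seq R :=
  match s with [::] => [:: a] | x :: s' => if a <= x then x :: ins a s' else a :: s end.

Lemma ger_trans : transitive ger.
Proof. move=> y x z hxy hyz; exact: le_trans hyz hxy. Qed.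
Lemma ger_anti : antisymmetric ger.
Proof. move=> x y /andP[h1 h2]; apply/eqP; rewrite /ger in h1 h2; by rewrite eq_le h1 h2. Qed.
Lemma ger_total : total ger.
Proof. move=> x y; exact: le_total y x. Qed.

Lemma ins_perm a s : perm_eq (ins a s) (a :: s).
Proof.
elim: s => [|x s IH] //=; case: ifP => _ //.
apply: (@perm_trans _ (x :: a :: s)); first by rewrite perm_cons.
by rewrite (perm_catCA [:: x] [:: a] s).
Qed.

Lemma ins_path a s y : path ger y s -> a <= y -> path ger y (ins a s).
Proof.
elim: s y => [|x s IH] y /=; first by move=> _ ay; rewrite /ger ay.
move=> /andP[yx ps] ay; case: ifP => ax /=.
  by rewrite yx /= IH.
by rewrite /ger ay /= ps andbT ltW // ltNge ax.
Qed.

Lemma ins_sorted a s : sorted ger s -> sorted ger (ins a s).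
Proof.
case: s => [|x s] //= ps; case: ifP => ax /=; first exact: ins_path.
by rewrite /ger ps andbT ltW // ltNge ax.
Qed.

Lemma sort_cons a L : sort ger (a :: L) = ins a (sort ger L).
Proof.
apply: (sorted_eq ger_trans ger_anti).
- exact: (@path.sort_sorted R ger ger_total (a :: L)).
- exact: (ins_sorted a _ (@path.sort_sorted R ger ger_total L)).
rewrite perm_sort perm_sym.
apply: (@perm_trans _ (a :: sort ger L)); first exact: ins_perm.
by rewrite perm_cons perm_sort.
Qed.

Definition H K (s : seq R) := \sum_(v <- take K s) v.

Lemma H_ins K a s : sorted ger s -> (0 < K)%N -> (K <= size s)%N ->
  H K (ins a s) = H K s + Num.max 0 (a - nth 0 s K.-1).
Proof.
rewrite /H.
elim: s K => [|x s IH] [|K] //= ps _ hK.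
have allx : all (ger x) s by apply: order_path_min ger_trans ps.
case: ifP => ax.
  case: K hK => [|K] hK /=.
    rewrite !take0 !big_cons !big_nil (_ : Num.max 0 (a - x) = 0) ?addr0 //.
    by apply/max_idPl; rewrite subr_le0.
  by rewrite !big_cons (IH K.+1) ?(path_sorted ps) //= addrA.
have nle : nth 0 (x :: s) K <= x.
  have : nth 0 (x :: s) K \in x :: s by exact: mem_nth.
  rewrite inE => /orP[/eqP -> //|hin].
  by have := allP allx _ hin.
have xa : x < a by rewrite ltNge ax.
rewrite [take K.+1 (a :: _)]/= big_cons -[x :: take K s]/(take K.+1 (x :: s)) (take_nth 0) // -cats1 big_cat big_seq1 /=.
rewrite (_ : Num.max 0 _ = a - nth 0 (x :: s) K); last first.
  apply/max_idPr; rewrite subr_ge0; apply: ltW; exact: le_lt_trans nle xa.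
rewrite /=; set T := \sum_(_ <- _) _; set n := nth _ _ _.
by rewrite -addrA (addrC n) subrK addrC.
Qed.

Lemma nth_succ s i : sorted ger s -> (i.+1 < size s)%N -> nth 0 s i.+1 <= nth 0 s i.
Proof.
move=> ss hi.
have := (sorted_leq_nth ger_trans (fun x => le_refl x) 0 ss) i i.+1.
rewrite !inE hi (ltnW hi) leqnSn; apply => //.
Qed.

Lemma nth_ins a s i : sorted ger s -> (i < size s)%N -> nth 0 s i <= nth 0 (ins a s) i.
Proof.
elim: s i => [|x s IH] i //= ps hi.
case: ifP => ax.
  case: i hi => [|i] hi /=; first by [].
  exact: IH (path_sorted ps) _.
case: i hi => [|i] hi /=; first by apply: ltW; rewrite ltNge ax.
exact: (@nth_succ (x :: s) i ps hi).
Qed.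

Lemma H_gt0 K s : (0 < K)%N -> (0 < size s)%N -> all (fun v => 0 < v) s -> 0 < H K s.
Proof.
rewrite /H; case: K => [|K] //; case: s => [|x s] //= _ _ /andP[x0 ps].
rewrite big_cons.
have hs : 0 <= \sum_(v <- take K s) v.
  rewrite big_seq; apply: sumr_ge0 => v /mem_take hv; apply: ltW; exact: (allP ps).
apply: (lt_le_trans x0); by rewrite lerDl.
Qed.

Lemma core K a b L : (0 < K)%N -> (K <= size L)%N -> all (fun v => 0 < v) L ->
  0 < a -> 0 < b ->
  ln (H K (sort ger (a :: b :: L))) - ln (H K (sort ger (b :: L))) <=
  ln (H K (sort ger (a :: L))) - ln (H K (sort ger L)).
Proof.
move=> K0 KL pL a0 b0.
rewrite !sort_cons.
set s := sort ger L.
have ss : sorted ger s by exact: (@path.sort_sorted R ger ger_total L).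
have sz : size s = size L by rewrite size_sort.
have ps : all (fun v => 0 < v) s by rewrite (perm_all _ (permEl (perm_sort ger L))).
have psz : (0 < size s)%N by rewrite sz; exact: leq_trans K0 KL.
have pins c t : 0 < c -> all (fun v => 0 < v) t -> all (fun v => 0 < v) (ins c t).
  by move=> c0 pt; rewrite (perm_all _ (ins_perm c t)) /= c0.
have sins c t : size (ins c t) = (size t).+1.
  by rewrite (perm_size (ins_perm c t)).
have P0 := H_gt0 K s K0 psz ps.
have Pa : 0 < H K (ins a s).
  by apply: (H_gt0 K _ K0) (pins a s a0 ps); rewrite sins.
have Pb : 0 < H K (ins b s).
  by apply: (H_gt0 K _ K0) (pins b s b0 ps); rewrite sins.
have Pab : 0 < H K (ins a (ins b s)).
  by apply: (H_gt0 K _ K0) (pins a _ a0 (pins b s b0 ps)); rewrite sins.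
have ea := H_ins K a s ss K0 (leq_trans KL (eq_leq (esym sz))).
have eb := H_ins K b s ss K0 (leq_trans KL (eq_leq (esym sz))).
have eab := H_ins K a (ins b s) (ins_sorted b s ss) K0 (leq_trans (leq_trans KL (eq_leq (esym sz))) (_ : size s <= size (ins b s))%N).
rewrite sins in eab; have /(_ (leqnSn _)) eab' := eab; clear eab; rename eab' into eab.
have nn : nth 0 s K.-1 <= nth 0 (ins b s) K.-1.
  apply: nth_ins => //; rewrite sz prednK //; exact: leq_trans KL _.
have hm : Num.max 0 (a - nth 0 (ins b s) K.-1) <= Num.max 0 (a - nth 0 s K.-1).
  rewrite ge_max; apply/andP; split; rewrite le_max ?lexx //.
  by rewrite lerD2l lerN2 nn orbT.
set p := Num.max 0 (a - nth 0 s K.-1) in ea hm.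
set q := Num.max 0 (b - nth 0 s K.-1) in eb.
set p' := Num.max 0 (a - nth 0 (ins b s) K.-1) in eab hm.
have p0 : 0 <= p by rewrite le_max lexx.
have q0 : 0 <= q by rewrite le_max lexx.
rewrite lerBlDr addrAC lerBrDr -!lnM ?posrE; try by apply: mulr_gt0.
rewrite ler_ln ?posrE; try by apply: mulr_gt0.
rewrite eab eb ea.
set P := H K s in P0 *.
nra.
all: assumption.
Qed.
End Core.

Lemma path_ones (R : realType) K (z : R) : 1 <= z -> path (@ger R) z (nseq K 1).
Proof.
elim: K z => [|K IH] z hz //=; apply/andP; split; first exact: hz.
exact: IH.
Qed.

Lemma sorted_ones (R : realType) K (s : seq R) :
  sorted (@ger R) s -> all (fun v => 1 <= v) s -> sorted (@ger R) (s ++ nseq K 1).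
Proof.
case: s => [|y s] /=.
  by move=> _ _; case: K => [|K] //=; apply: path_ones.
move=> ps hall; rewrite cat_path ps /=; apply: path_ones.
have : last y s \in y :: s by exact: mem_last.
have hall' : all (fun v => 1 <= v) (y :: s) := hall.
by move/(allP hall').
Qed.

Lemma topK_H (R : realType) d (sigma : 'rV[R]_d -> 'rV[R]_d -> R) beta K
    (S : seq 'rV[R]_d) x (hb : 0 < beta) (hs : forall s, 0 <= sigma s x) :
  \sum_(v <- topK_scores sigma K S x) expR (v / beta) =
  @H R K (sort (@ger R) ([seq expR (sigma s x / beta) | s <- S] ++ nseq K 1)).
Proof.
set g := fun s => expR (sigma s x / beta).
set M := [seq g s | s <- S].
have hM : all (fun v => 1 <= v) M.
  apply/allP => v /mapP[s _ ->]; rewrite /g -expR0 ler_expR.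
  by apply: divr_ge0 (hs s) (ltW hb).
have sM : sorted (@ger R) (sort (@ger R) M) by exact: (@path.sort_sorted R _ (@ger_total R) M).
have hsM : all (fun v => 1 <= v) (sort (@ger R) M) by rewrite (perm_all _ (permEl (perm_sort _ _))).
have -> : sort (@ger R) (M ++ nseq K 1) = sort (@ger R) M ++ nseq K 1.
  apply: (sorted_eq (@ger_trans R) (@ger_anti R)).
  - exact: (@path.sort_sorted R _ (@ger_total R)).
  - exact: sorted_ones.
  by rewrite perm_sort perm_cat2r perm_sym perm_sort.
rewrite /topK_scores big_cat /= /H.
have e1 : \sum_(v <- [seq sigma s x | s <- take K (sort (fun a b => sigma b x <= sigma a x) S)]) expR (v / beta)
   = \sum_(v <- take K (sort (@ger R) M)) v.
  rewrite /M sort_map.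
  have -> : sort (relpre g (@ger R)) S = sort (fun a b => sigma b x <= sigma a x) S.
    congr sort; apply/funext => a; apply/funext => b.
    by rewrite /= /ger /g ler_expR ler_pM2r ?invr_gt0.
  by rewrite -map_take !big_map.
have e2 : \sum_(v <- nseq (K - size S) 0) expR (v / beta) = \sum_(v <- nseq (K - size S) (1:R)) v.
  by rewrite !big_nseq mul0r expR0.
rewrite e1 e2 take_cat size_sort size_map.
case: ltnP => hK.
  by rewrite (_ : (K - size S)%N = 0%N) ?big_nil ?addr0 //; apply/eqP; rewrite subn_eq0 ltnW.
rewrite take_oversize ?size_sort ?size_map // take_nseq ?leq_subr //.
by rewrite big_cat.
Qed.

Theorem lemma2 (R : realType) (d : nat) (beta : R) (K m : nat)
    (X : 'I_m -> 'rV[R]_d) (sigma : 'rV[R]_d -> 'rV[R]_d -> R)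
    (hbeta : 0 < beta) (hK : (1 <= K)%N)
    (hsigma : forall s x, 0 <= sigma s x <= 1)
    (S : seq 'rV[R]_d) (hS : (K.-1 <= size S)%N) (sx sy : 'rV[R]_d) :
  welfare sigma beta K X (sx :: S) - welfare sigma beta K X S >=
  welfare sigma beta K X (sx :: sy :: S) - welfare sigma beta K X (sy :: S).
Proof.
rewrite /welfare -!mulrBr -!sumrB ler_pM2l //.
apply: ler_sum => j _.
have hs : forall s, 0 <= sigma s (X j) by move=> s; case/andP: (hsigma s (X j)).
rewrite !(@topK_H R d sigma beta K _ (X j) hbeta hs) /=.
apply: core => //.
- by rewrite size_cat size_nseq leq_addl.
- rewrite all_cat; apply/andP; split.
    by apply/allP => v /mapP[s _ ->]; exact: expR_gt0.
  by apply/allP => v /nseqP[-> _]; exact: ltr01.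
- exact: expR_gt0.
- exact: expR_gt0.
Qed.
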